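(* Let $n\in\mathbb{N}_0$. For $0\le k\le n/2$, the polynomial $r_{n,2k}:=2\sum_{0\le j\le n/2}M^{(n)}_{2j,2k}b_{n,2j}+b_{n,2k}$ is totally symmetric, and for $0\le k\le (n-1)/2$ the polynomial $r_{n,2k+1}:=-2\sum_{0\le j\le (n-1)/2}M^{(n)}_{2j+1,2k+1}b_{n,2j+1}+b_{n,2k+1}$ satisfies $Mr_{n,2k+1}=-r_{n,2k+1}=Rr_{n,2k+1}$.
   Context: $\widehat T$ is the triangle with vertices $(0,0),(1,0),(0,1)$. $P_m^{(\alpha,\beta)}$ are the Jacobi polynomials with $P_m^{(\alpha,\beta)}(1)=(\alpha+1)_m/m!$; $P_k^{(0,0)}$ are the Legendre polynomials. For $0\le k\le n$, $b_{n,k}(x_1,x_2):=(x_1+x_2)^kP^{(0,2k+1)}_{n-k}(2(x_1+x_2)-1)P^{(0,0)}_k\!\left(\frac{x_1-x_2}{x_1+x_2}\right)$; these form a basis of the space $\mathbb{P}^\perp_{n,n-1}(\widehat T)$ of polynomials of degree $\le n$ that are $L^2(\widehat T)$-orthogonal to all polynomials of degree $\le n-1$. Define $Mp(x_1,x_2):=p(1-x_1-x_2,x_2)$ and $Rp(x_1,x_2):=p(x_2,x_1)$, and let $M^{(n)}_{j,k}$ be the matrix entries of $M$ in this basis: $Mb_{n,k}=\sum_{j=0}^n b_{n,j}M^{(n)}_{j,k}$. A function $u$ on $\widehat T$ is totally symmetric if $u\circ\chi=u$ for every affine bijection $\chi$ of $\widehat T$ onto itself (equivalently $Ru=u=Mu$).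 *)

(* Defs.v *)
From mathcomp Require Import all_boot all_order all_algebra.
From mathcomp Require Import reals.
Set Implicit Arguments. Unset Strict Implicit. Unset Printing Implicit Defensive.
Import Order.TTheory GRing.Theory Num.Theory.
Local Open Scope ring_scope.

Section Defs.
Variable R : realType.

(* Jacobi polynomial P_m^{(a,b)} for nonnegative integer parameters, via the
   standard explicit formula
   P_m^{(a,b)}(x) = sum_s C(m+a, m-s) C(m+b, s) ((x-1)/2)^s ((x+1)/2)^(m-s);
   normalisation P_m^{(a,b)}(1) = C(m+a,m) = (a+1)_m/m!. *)
Definition jacobi (a b m : nat) (x : R) : R :=
  \sum_(s < m.+1) ('C(m + a, m - s) * 'C(m + b, s))%:R
     * ((x - 1) / 2) ^+ s * ((x + 1) / 2) ^+ (m - s).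

Definition legendre (k : nat) (x : R) : R := jacobi 0 0 k x.

Definition inT (x1 x2 : R) : Prop := 0 <= x1 /\ 0 <= x2 /\ x1 + x2 <= 1.

(* b_{n,k}(x1,x2) = (x1+x2)^k P^{(0,2k+1)}_{n-k}(2(x1+x2)-1) P_k((x1-x2)/(x1+x2)).
   (Division by 0 is 0 in MathComp; on the closed triangle this only occurs at
   the origin, where the formula then gives the correct polynomial value.) *)
Definition bnk (n k : nat) (x1 x2 : R) : R :=
  (x1 + x2) ^+ k * jacobi 0 (2 * k + 1) (n - k) (2 * (x1 + x2) - 1)
    * legendre k ((x1 - x2) / (x1 + x2)).

Definition Mop (p : R -> R -> R) : R -> R -> R := fun x1 x2 => p (1 - x1 - x2) x2.
Definition Rop (p : R -> R -> R) : R -> R -> R := fun x1 x2 => p x2 x1.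

Definition affine_bij_T (chi : R * R -> R * R) : Prop :=
  (exists a11 a12 a21 a22 c1 c2 : R,
     forall x : R * R,
       chi x = (a11 * x.1 + a12 * x.2 + c1, a21 * x.1 + a22 * x.2 + c2))
  /\ (forall x : R * R, inT x.1 x.2 -> inT (chi x).1 (chi x).2)
  /\ (forall x y : R * R, inT x.1 x.2 -> inT y.1 y.2 -> chi x = chi y -> x = y)
  /\ (forall y : R * R, inT y.1 y.2 -> exists x : R * R, inT x.1 x.2 /\ chi x = y).

Definition totally_symmetric (u : R -> R -> R) : Prop :=
  forall chi, affine_bij_T chi ->
    forall x : R * R, inT x.1 x.2 -> u (chi x).1 (chi x).2 = u x.1 x.2.

Definition is_M_matrix (n : nat) (Mm : nat -> nat -> R) : Prop :=
  forall k, (k <= n)%N -> forall x1 x2, inT x1 x2 ->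
    Mop (bnk n k) x1 x2 = \sum_(j < n.+1) bnk n j x1 x2 * Mm j k.

Definition r_even (n : nat) (Mm : nat -> nat -> R) (k : nat) : R -> R -> R :=
  fun x1 x2 => 2 * (\sum_(j < n.+1 | (2 * j <= n)%N) Mm (2 * j)%N (2 * k)%N * bnk n (2 * j) x1 x2)
               + bnk n (2 * k) x1 x2.

Definition r_odd (n : nat) (Mm : nat -> nat -> R) (k : nat) : R -> R -> R :=
  fun x1 x2 => - 2 * (\sum_(j < n.+1 | (2 * j + 1 <= n)%N)
                        Mm (2 * j + 1)%N (2 * k + 1)%N * bnk n (2 * j + 1) x1 x2)
               + bnk n (2 * k + 1) x1 x2.

End Defs.

(* Main.v *)
Require Import Defs.
From mathcomp Require Import all_boot all_order all_algebra.
From mathcomp Require Import reals ring lra zify.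
From Stdlib Require Import Classical.
Import Order.TTheory GRing.Theory Num.Theory.
Local Open Scope ring_scope.

Section Geo.
Variable R : realType.

Definition vert3 (a b : R) : Prop :=
  (a = 0 /\ b = 0) \/ (a = 1 /\ b = 0) \/ (a = 0 /\ b = 1).

Definition six (y1 y2 x1 x2 : R) : Prop :=
  (y1 = x1 /\ y2 = x2) \/ (y1 = x2 /\ y2 = x1) \/ (y1 = 1 - x1 - x2 /\ y2 = x2) \/
  (y1 = x2 /\ y2 = 1 - x1 - x2) \/ (y1 = x1 /\ y2 = 1 - x1 - x2) \/
  (y1 = 1 - x1 - x2 /\ y2 = x1).

Lemma six_cases (p01 p02 p11 p12 p21 p22 x1 x2 : R) :
  vert3 p01 p02 -> vert3 p11 p12 -> vert3 p21 p22 ->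
  ~ (p01 = p11 /\ p02 = p12) -> ~ (p01 = p21 /\ p02 = p22) ->
  ~ (p11 = p21 /\ p12 = p22) ->
  six (p01 + (p11 - p01) * x1 + (p21 - p01) * x2)
      (p02 + (p12 - p02) * x1 + (p22 - p02) * x2) x1 x2.
Proof.
move=> [[-> ->]|[[-> ->]|[-> ->]]] [[-> ->]|[[-> ->]|[-> ->]]]
        [[-> ->]|[[-> ->]|[-> ->]]] n01 n02 n12;
  rewrite /six; first [ by exfalso; first [by apply: n01 | by apply: n02 | by apply: n12]
        | do ?[ by left; split; ring | right ]; split; ring ].
Qed.

Lemma inv6 (u : R -> R -> R) :
  (forall a b, u b a = u a b) -> (forall a b, u (1 - a - b) b = u a b) ->
  forall y1 y2 x1 x2, six y1 y2 x1 x2 -> u y1 y2 = u x1 x2.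
Proof.
move=> hs hm y1 y2 x1 x2.
have e : 1 - x1 - x2 = 1 - x2 - x1 by ring.
case=> [[-> ->]|[[-> ->]|[[-> ->]|[[-> ->]|[[-> ->]|[-> ->]]]]]] //.
- by rewrite hs hm.
- by rewrite hs e hm hs.
- by rewrite e hm hs.
Qed.

Lemma nonvertex (q1 q2 : R) : inT q1 q2 -> ~ vert3 q1 q2 ->
  exists d1 d2 : R, ~ (d1 = 0 /\ d2 = 0) /\ inT (q1 + d1) (q2 + d2) /\
                    inT (q1 - d1) (q2 - d2).
Proof.
rewrite /inT /vert3 => [[h1 [h2 h3]]] nv.
have [a1|a1] := lerP q1 0.
  have [b1|b1] := lerP q2 0.
    by exfalso; apply: nv; left; split; lra.
  have [b2|b2] := lerP 1 q2.
    by exfalso; apply: nv; right; right; split; lra.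
  have [c|c] := lerP q2 (1 - q2).
    by exists 0, q2; split; [lra | split; lra].
  by exists 0, (1 - q2); split; [lra | split; lra].
have [b1|b1] := lerP q2 0.
  have [b2|b2] := lerP 1 q1.
    by exfalso; apply: nv; right; left; split; lra.
  have [c|c] := lerP q1 (1 - q1).
    by exists q1, 0; split; [lra | split; lra].
  by exists (1 - q1), 0; split; [lra | split; lra].
have [c|c] := lerP q1 q2.
  by exists q1, (- q1); split; [lra | split; lra].
by exists q2, (- q2); split; [lra | split; lra].
Qed.

Lemma vert_ext (v1 v2 a1 a2 b1 b2 : R) : vert3 v1 v2 -> inT a1 a2 -> inT b1 b2 ->
  (a1 + b1) / 2 = v1 -> (a2 + b2) / 2 = v2 -> a1 = v1 /\ a2 = v2 /\ b1 = v1 /\ b2 = v2.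
Proof.
rewrite /inT => hv [ha1 [ha2 ha3]] [hb1 [hb2 hb3]] e1 e2.
have e1' : a1 + b1 = 2 * v1 by rewrite -e1; field.
have e2' : a2 + b2 = 2 * v2 by rewrite -e2; field.
by case: hv => [[h1 h2]|[[h1 h2]|[h1 h2]]]; rewrite h1 h2 in e1' e2' *;
  do ?split; lra.
Qed.

Lemma vertex_image (chi : R * R -> R * R) : affine_bij_T chi ->
  forall v : R * R, vert3 v.1 v.2 -> inT v.1 v.2 -> vert3 (chi v).1 (chi v).2.
Proof.
case=> [[a11 [a12 [a21 [a22 [c1 [c2 Hf]]]]]] [HT [Hinj Hsurj]]] v hv hvT.
apply: NNPP => nv.
have [d1 [d2 [nd [hp hm]]]] := nonvertex _ _ (HT v hvT) nv.
have [a [haT ha]] := Hsurj ((chi v).1 + d1, (chi v).2 + d2) hp.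
have [b [hbT hb]] := Hsurj ((chi v).1 - d1, (chi v).2 - d2) hm.
set m : R * R := ((a.1 + b.1) / 2, (a.2 + b.2) / 2).
have hmT : inT m.1 m.2.
  move: haT hbT; rewrite /inT /m /= => [[? [? ?]] [? [? ?]]]; split; [|split]; lra.
have hcm : chi m = chi v.
  move: ha hb; rewrite !Hf /m /= => -[e1 e2] [e3 e4].
  congr (_, _); lra.
have hmv := Hinj _ _ hmT hvT hcm.
have [ea1 [ea2 [eb1 eb2]]] := vert_ext _ _ _ _ _ _ hv haT hbT (congr1 fst hmv) (congr1 snd hmv).
have hab : a = b by case: a b ea1 ea2 eb1 eb2 {ha hb haT hbT hmv m hmT hcm} => [? ?] [? ?] /= -> -> -> ->.
rewrite hab hb in ha; case: ha => h1 h2.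
by apply: nd; split; lra.
Qed.

Lemma chi_six (chi : R * R -> R * R) : affine_bij_T chi ->
  forall x : R * R, six (chi x).1 (chi x).2 x.1 x.2.
Proof.
move=> H; have H' := H.
case: H' => [[a11 [a12 [a21 [a22 [c1 [c2 Hf]]]]]] [HT [Hinj Hsurj]]] x.
have T0 : inT (0:R) 0 by rewrite /inT; lra.
have T1 : inT (1:R) 0 by rewrite /inT; lra.
have T2 : inT (0:R) 1 by rewrite /inT; lra.
have v0 := vertex_image _ H (0, 0) (or_introl (conj erefl erefl)) T0.
have v1 := vertex_image _ H (1, 0) (or_intror (or_introl (conj erefl erefl))) T1.
have v2 := vertex_image _ H (0, 1) (or_intror (or_intror (conj erefl erefl))) T2.
have n01 : ~ ((chi (0, 0)).1 = (chi (1, 0)).1 /\ (chi (0, 0)).2 = (chi (1, 0)).2).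
  move=> [e1 e2]; have := Hinj (0, 0) (1, 0) T0 T1.
  move=> /(_ (injective_projections _ _ e1 e2)) /(congr1 fst) /=; lra.
have n02 : ~ ((chi (0, 0)).1 = (chi (0, 1)).1 /\ (chi (0, 0)).2 = (chi (0, 1)).2).
  move=> [e1 e2]; have := Hinj (0, 0) (0, 1) T0 T2.
  move=> /(_ (injective_projections _ _ e1 e2)) /(congr1 snd) /=; lra.
have n12 : ~ ((chi (1, 0)).1 = (chi (0, 1)).1 /\ (chi (1, 0)).2 = (chi (0, 1)).2).
  move=> [e1 e2]; have := Hinj (1, 0) (0, 1) T1 T2.
  move=> /(_ (injective_projections _ _ e1 e2)) /(congr1 snd) /=; lra.
have := six_cases _ _ _ _ _ _ x.1 x.2 v0 v1 v2 n01 n02 n12.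
rewrite !Hf /=.
have -> : a11 * 0 + a12 * 0 + c1 + (a11 * 1 + a12 * 0 + c1 - (a11 * 0 + a12 * 0 + c1)) * x.1 +
   (a11 * 0 + a12 * 1 + c1 - (a11 * 0 + a12 * 0 + c1)) * x.2 = a11 * x.1 + a12 * x.2 + c1 by ring.
have -> : a21 * 0 + a22 * 0 + c2 + (a21 * 1 + a22 * 0 + c2 - (a21 * 0 + a22 * 0 + c2)) * x.1 +
   (a21 * 0 + a22 * 1 + c2 - (a21 * 0 + a22 * 0 + c2)) * x.2 = a21 * x.1 + a22 * x.2 + c2 by ring.
by [].
Qed.

Lemma affine_inv (u : R -> R -> R) :
  (forall a b, u b a = u a b) -> (forall a b, u (1 - a - b) b = u a b) ->
  forall chi, affine_bij_T chi -> forall x : R * R, u (chi x).1 (chi x).2 = u x.1 x.2.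
Proof. by move=> hs hm chi H x; apply: inv6 => //; apply: chi_six. Qed.


Lemma legendreN k (t : R) : legendre k (- t) = (-1) ^+ k * legendre k t.
Proof.
rewrite /legendre /jacobi addn0 mulr_sumr.
rewrite [RHS](reindex_inj rev_ord_inj) /=.
apply: eq_bigr => s _ /=.
rewrite subSS subKn ?leq_ord // mulnC.
have -> : (- t - 1) / 2 = - ((t + 1) / 2) by rewrite -opprD mulNr.
have -> : (- t + 1) / 2 = - ((t - 1) / 2) by rewrite -mulNr opprB [1 - t]addrC.
have E : (-1) ^+ k = (-1) ^+ s * (-1) ^+ (k - s) :> R.
  rewrite -exprD subnKC //. exact: leq_ord.
rewrite E (exprNn ((t + 1) / 2)) (exprNn ((t - 1) / 2)).
move: (_%:R) ((-1) ^+ s) ((-1) ^+ (k - s)) (((t + 1) / 2) ^+ s) (((t - 1) / 2) ^+ (k - s)) => A B C D F.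
ring.
Qed.
Lemma bnk_swap n k (x1 x2 : R) : bnk n k x2 x1 = (-1) ^+ k * bnk n k x1 x2.
Proof.
rewrite /bnk (addrC x2 x1).
have -> : (x2 - x1) / (x1 + x2) = - ((x1 - x2) / (x1 + x2)) by rewrite -mulNr opprB.
rewrite legendreN; move: (_ ^+ k) (jacobi _ _ _ _) (legendre _ _) ((-1) ^+ k) => A B C D; ring.
Qed.

Lemma sum_par (f : nat -> R) n :
  \sum_(j < n.+1) f j = \sum_(j < n.+1 | (2 * j <= n)%N) f (2 * j)%N
                      + \sum_(j < n.+1 | (2 * j + 1 <= n)%N) f (2 * j + 1)%N.
Proof.
elim: n f => [|n IH] f.
  rewrite (big_mkcond (fun j : 'I__ => (2 * j <= _)%N)) (big_mkcond (fun j : 'I__ => (2 * j + 1 <= _)%N)).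
  by rewrite !big_ord1 /= addr0.
rewrite big_ord_recl (IH (fun j => f j.+1)).
rewrite (big_mkcond (fun j : 'I__ => (2 * j <= _)%N)) (big_mkcond (fun j : 'I__ => (2 * j + 1 <= _)%N)).
rewrite (big_mkcond (fun j : 'I_n.+2 => (2 * j <= _)%N)) (big_mkcond (fun j : 'I_n.+2 => (2 * j + 1 <= _)%N)).
rewrite [in RHS]big_ord_recl [X in _ = _ + X]big_ord_recr /=.
have -> : (2 * n.+1 + 1 <= n.+1)%N = false by lia.
rewrite muln0 addr0 -!addrA; congr (_ + _); rewrite addrC; congr (_ + _).
  apply: eq_bigr => i _.
  have -> : (2 * i + 1 <= n.+1)%N = (2 * i <= n)%N by lia.
  by rewrite addn1.
apply: eq_bigr => i _; rewrite /bump leq0n add1n.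
have -> : (2 * i.+1 <= n.+1)%N = (2 * i + 1 <= n)%N by lia.
by have -> : (2 * i.+1)%N = (2 * i + 1).+1 by lia.
Qed.

Lemma sign_even j : (-1) ^+ (2 * j)%N = 1 :> R.
Proof. by rewrite exprM sqrrN expr1n expr1n. Qed.

Lemma sign_odd j : (-1) ^+ (2 * j + 1)%N = -1 :> R.
Proof. by rewrite exprD sign_even expr1 mul1r. Qed.

Lemma inT_swap {x1 x2 : R} : inT x1 x2 -> inT x2 x1.
Proof. by rewrite /inT => -[? [? ?]]; split; [|split]; lra. Qed.

Lemma inT_M {x1 x2 : R} : inT x1 x2 -> inT (1 - x1 - x2) x2.
Proof. by rewrite /inT => -[? [? ?]]; split; [|split]; lra. Qed.

Lemma r_even_eq n Mm k (x1 x2 : R) : is_M_matrix n Mm -> (2 * k <= n)%N -> inT x1 x2 ->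
  r_even n Mm k x1 x2 = bnk n (2 * k) x1 x2 + bnk n (2 * k) (1 - x1 - x2) x2
                        + bnk n (2 * k) (1 - x2 - x1) x1.
Proof.
move=> HM hk hx.
have h1 := HM _ hk x1 x2 hx.
have h2 := HM _ hk x2 x1 (inT_swap hx).
rewrite /Mop in h1 h2; rewrite -addrA h1 h2 -big_split.
pose F := fun j : nat => bnk n j x1 x2 * Mm j (2 * k)%N + (-1) ^+ j * (bnk n j x1 x2 * Mm j (2 * k)%N).
rewrite (eq_bigr (fun j : 'I_n.+1 => F j)); last first.
  by move=> j _; rewrite /F (bnk_swap n j x1 x2); congr (_ + _); exact: esym (mulrA _ _ _).
rewrite (sum_par F) /F.
rewrite [X in _ = _ + (_ + X)]big1; last first.
  by move=> j _; rewrite sign_odd mulN1r subrr.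
rewrite addr0 /r_even addrC big_distrr; congr (_ + _); apply: eq_bigr => j _.
rewrite sign_even; move: (Mm _ _) (bnk _ _ _ _) => A B.
have E : (2:R) * (A * B) = B * A + 1 * (B * A) by ring. exact: E.
Qed.

Lemma r_odd_eq n Mm k (x1 x2 : R) : is_M_matrix n Mm -> (2 * k + 1 <= n)%N -> inT x1 x2 ->
  r_odd n Mm k x1 x2 = bnk n (2 * k + 1) x1 x2 - bnk n (2 * k + 1) (1 - x1 - x2) x2
                        + bnk n (2 * k + 1) (1 - x2 - x1) x1.
Proof.
move=> HM hk hx.
have h1 := HM _ hk x1 x2 hx.
have h2 := HM _ hk x2 x1 (inT_swap hx).
rewrite /Mop in h1 h2; rewrite h1 h2.
have -> : forall a b c : R, a - b + c = a - (b - c) by move=> *; ring.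
rewrite -sumrB.
pose F := fun j : nat => bnk n j x1 x2 * Mm j (2 * k + 1)%N - (-1) ^+ j * (bnk n j x1 x2 * Mm j (2 * k + 1)%N).
rewrite (eq_bigr (fun j : 'I_n.+1 => F j)); last first.
  by move=> j _; rewrite /F (bnk_swap n j x1 x2); congr (_ - _); exact: esym (mulrA _ _ _).
rewrite (sum_par F) /F.
rewrite [X in _ = _ - (X + _)]big1; last first.
  by move=> j _; rewrite sign_even mul1r subrr.
rewrite add0r /r_odd addrC; congr (_ + _).
rewrite big_distrr -sumrN; apply: eq_bigr => j _.
rewrite sign_odd; move: (Mm _ _) (bnk _ _ _ _) => A B.
have E : (-2:R) * (A * B) = - (B * A - (-1) * (B * A)) by ring. exact: E.
Qed.

Lemma U_inv (B : R -> R -> R) (hB : forall a b, B b a = B a b) :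
  let u := fun a b => B a b + B (1 - a - b) b + B (1 - b - a) a in
  (forall a b, u b a = u a b) /\ (forall a b, u (1 - a - b) b = u a b).
Proof.
move=> u; split=> a b; rewrite /u.
  have -> : 1 - a - b = 1 - b - a by ring.
  rewrite (hB b a); ring.
have -> : 1 - (1 - a - b) - b = a by ring.
have -> : 1 - b - (1 - a - b) = a by ring.
have -> : 1 - b - a = 1 - a - b by ring.
rewrite (hB a (1 - a - b)); ring.
Qed.

Lemma V_inv (B : R -> R -> R) (hB : forall a b, B b a = - B a b) (a b : R) :
  let v := fun a b => B a b - B (1 - a - b) b + B (1 - b - a) a in
  v b a = - v a b /\ v (1 - a - b) b = - v a b.
Proof.
move=> v; split; rewrite /v.
  have -> : 1 - a - b = 1 - b - a by ring.
  rewrite (hB b a); ring.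
have -> : 1 - (1 - a - b) - b = a by ring.
have -> : 1 - b - (1 - a - b) = a by ring.
have -> : 1 - b - a = 1 - a - b by ring.
rewrite (hB a (1 - a - b)); ring.
Qed.
End Geo.

Theorem corollary17 (R : realType) (n : nat) (Mm : nat -> nat -> R) :
  is_M_matrix n Mm ->
  (forall k : nat, (2 * k <= n)%N -> totally_symmetric (r_even n Mm k)) /\
  (forall k : nat, (2 * k + 1 <= n)%N ->
     forall x1 x2 : R, inT x1 x2 ->
       Mop (r_odd n Mm k) x1 x2 = - r_odd n Mm k x1 x2 /\
       - r_odd n Mm k x1 x2 = Rop (r_odd n Mm k) x1 x2).
Proof.
move=> HM; split.
- move=> k hk chi H x hx.
  have hcx : inT (chi x).1 (chi x).2 by case: H => _ [HT _]; exact: HT.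
  rewrite (@r_even_eq _ _ _ _ _ _ HM hk hcx) (@r_even_eq _ _ _ _ _ _ HM hk hx).
  have hB : forall a b : R, bnk n (2 * k) b a = bnk n (2 * k) a b.
    by move=> a b; rewrite bnk_swap sign_even mul1r.
  have [hs hm] := @U_inv _ _ hB.
  exact: (@affine_inv _ _ hs hm _ H x).
- move=> k hk x1 x2 hx.
  have hB : forall a b : R, bnk n (2 * k + 1) b a = - bnk n (2 * k + 1) a b.
    by move=> a b; rewrite bnk_swap sign_odd mulN1r.
  have [v1 v2] := @V_inv _ _ hB x1 x2.
  rewrite /Mop /Rop (@r_odd_eq _ _ _ _ _ _ HM hk (@inT_M _ _ _ hx))
    (@r_odd_eq _ _ _ _ _ _ HM hk (@inT_swap _ _ _ hx)) (@r_odd_eq _ _ _ _ _ _ HM hk hx).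
  by split; [exact: v2 | exact: esym v1].
Qed.
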